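(* Let $n\ge 3$ be an odd integer and $(\mathcal{C},\Sigma)$ an $n$-angulated category. For objects $A,B$ of $\mathcal{C}$ the following are equivalent: (1) $[A]=[B]$ in $K_0(\mathcal{C})$; (2) there exist objects $C_1,\dots,C_n$ and two $n$-angles $A\oplus C_1\xrightarrow{\alpha_1}C_2\xrightarrow{\alpha_2}\cdots\xrightarrow{\alpha_{n-1}}C_n\xrightarrow{\alpha_n}\Sigma A\oplus\Sigma C_1$ and $B\oplus C_1\xrightarrow{\beta_1}C_2\xrightarrow{\beta_2}\cdots\xrightarrow{\beta_{n-1}}C_n\xrightarrow{\beta_n}\Sigma B\oplus\Sigma C_1$ in $\mathcal{C}$.
   Context: All categories are small. Fix an integer $n\ge 3$. Let $\mathcal{C}$ be an additive category with an automorphism $\Sigma$. An $n$-$\Sigma$-sequence in $\mathcal{C}$ is a diagram $A_1\xrightarrow{\alpha_1}A_2\xrightarrow{\alpha_2}\cdots\xrightarrow{\alpha_{n-1}}A_n\xrightarrow{\alpha_n}\Sigma A_1$. Its left rotation is $A_2\xrightarrow{\alpha_2}\cdots\xrightarrow{\alpha_n}\Sigma A_1\xrightarrow{(-1)^n\Sigma\alpha_1}\Sigma A_2$. A morphism from $(A_\bullet,\alpha)$ to $(B_\bullet,\beta)$ is a tuple $(\varphi_1,\dots,\varphi_n)$, $\varphi_i:A_i\to B_i$, with $\beta_i\varphi_i=\varphi_{i+1}\alpha_i$ for $1\le i\le n-1$ and $\beta_n\varphi_n=(\Sigma\varphi_1)\alpha_n$; it is an isomorphism if all $\varphi_i$ are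 isomorphisms. Direct sums of sequences are taken termwise. $(\mathcal{C},\Sigma)$ is $n$-angulated if it is equipped with a collection $\mathscr N$ of $n$-$\Sigma$-sequences, called $n$-angles, such that: (N1)(a) $\mathscr N$ is closed under direct sums, direct summands and isomorphisms of $n$-$\Sigma$-sequences; (b) for every object $A$, the trivial sequence $A\xrightarrow{1}A\to0\to\cdots\to0\to\Sigma A$ is in $\mathscr N$; (c) every morphism $A_1\to A_2$ is the first morphism of some $n$-angle; (N2) an $n$-$\Sigma$-sequence is in $\mathscr N$ iff its left rotation is; (N3) given $n$-angles $(A_\bullet,\alpha),(B_\bullet,\beta)$ and $\varphi_1:A_1\to B_1$, $\varphi_2:A_2\to B_2$ with $\beta_1\varphi_1=\varphi_2\alpha_1$, there exist $\varphi_3,\dots,\varphi_n$ making $(\varphi_1,\dots,\varphi_n)$ a morphism; (N4) in (N3) the $\varphi_i$ can be chosen so that the mapping cone $A_2\oplus B_1\to A_3\oplus B_2\to\cdots\to\Sigma A_1\oplus B_n\to\Sigma A_2\oplus\Sigma B_1$, with maps $\left[\begin{smallmatrix}-\alpha_{i+1}&0\\ \varphi_{i+1}&\beta_i\end{smallmatrix}\right]$ ($1\le i\le n-1$) and last map $\left[\begin{smallmatrix}-\Sigma\alpha_1&0\\ \Sigma\varphi_1&\beta_n\end{smallmatrix}\right]$, is an $n$-angle. Grothendieck group: let $F(\mathcal{C})$ be the free abelian group on the isomorphism classes $\langle A\rangle$ of objects of $\mathcal{C}$. For an $n$-angle $A_\bullet$ put $\chi(A_\bullet)=\sum_{i=1}^n(-1)^{i+1}\langle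 A_i\rangle$. Let $R(\mathcal{C})$ be the subgroup generated by all $\chi(A_\bullet)$ ($A_\bullet$ an $n$-angle), together with $\langle 0\rangle$ when $n$ is even. Then $K_0(\mathcal{C})=F(\mathcal{C})/R(\mathcal{C})$, and $[A]$ denotes the class of $\langle A\rangle$. *)

(* Defs.v *)
From HB Require Import structures.
From mathcomp Require Import all_boot all_order all_algebra.
From Stdlib Require Import ClassicalEpsilon.
Set Implicit Arguments. Unset Strict Implicit. Unset Printing Implicit Defensive.
Import GRing.Theory.
Local Open Scope ring_scope.

Record Cat := {
  Obj : Type;
  Hom : Obj -> Obj -> zmodType;
  comp : forall A B C : Obj, Hom B C -> Hom A B -> Hom A C;
  idm : forall A : Obj, Hom A A;
  zob : Obj;
  dsum : Obj -> Obj -> Obj;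
  inj1 : forall A B, Hom A (dsum A B);
  inj2 : forall A B, Hom B (dsum A B);
  prj1 : forall A B, Hom (dsum A B) A;
  prj2 : forall A B, Hom (dsum A B) B }.

Arguments comp {c A B C}.
Arguments idm {c}.
Arguments zob {c}.
Arguments dsum {c}.
Arguments inj1 {c A B}.
Arguments inj2 {c A B}.
Arguments prj1 {c A B}.
Arguments prj2 {c A B}.

Definition additive (C : Cat) : Prop :=
  (forall (A B X D : Obj C) (f : Hom X D) (g : Hom B X) (h : Hom A B),
      comp f (comp g h) = comp (comp f g) h) /\
  (forall (A B : Obj C) (f : Hom A B), comp (idm B) f = f /\ comp f (idm A) = f) /\
  (forall (A B X : Obj C) (f : Hom B X) (g h : Hom A B),
      comp f (g + h) = comp f g + comp f h) /\
  (forall (A B X : Obj C) (f g : Hom B X) (h : Hom A B),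
      comp (f + g) h = comp f h + comp g h) /\
  (forall (A : Obj C) (f : Hom zob A), f = 0) /\
  (forall (A : Obj C) (f : Hom A zob), f = 0) /\
  (forall A B : Obj C,
      comp (@prj1 C A B) inj1 = idm A /\ comp (@prj2 C A B) inj2 = idm B /\
      comp (@prj1 C A B) inj2 = 0 /\ comp (@prj2 C A B) inj1 = 0 /\
      comp inj1 prj1 + comp inj2 prj2 = idm (dsum A B)).

Definition isom (C : Cat) (A B : Obj C) (f : Hom A B) : Prop :=
  exists g : Hom B A, comp g f = idm A /\ comp f g = idm B.

Definition iso_ob (C : Cat) (A B : Obj C) : Prop := exists f : Hom A B, isom f.

Definition heq (C : Cat) (A B A' B' : Obj C) (f : Hom A B) (g : Hom A' B') : Prop :=
  existT (fun p : Obj C * Obj C => Hom p.1 p.2) (A, B) f =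
  existT (fun p : Obj C * Obj C => Hom p.1 p.2) (A', B') g.

Record Endo (C : Cat) := {
  So : Obj C -> Obj C;
  Sm : forall A B : Obj C, Hom A B -> Hom (So A) (So B) }.
Arguments So {C}.
Arguments Sm {C} e {A B}.

Definition is_autom (C : Cat) (S : Endo C) : Prop :=
  (forall A : Obj C, Sm S (idm A) = idm (So S A)) /\
  (forall (A B X : Obj C) (f : Hom B X) (g : Hom A B),
      Sm S (comp f g) = comp (Sm S f) (Sm S g)) /\
  (forall (A B : Obj C) (f g : Hom A B), Sm S (f + g) = Sm S f + Sm S g) /\
  injective (So S) /\ (forall Y : Obj C, exists A, So S A = Y) /\
  (forall A B : Obj C, bijective (@Sm C S A B)).

(* n-Sigma-sequences.  Paper indices 1..n are shifted to 0..n-1; the   *)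
(* last index n-1 is written n.-2.+1 (equal to n-1 for n >= 2) so that *)
(* it is definitionally the successor of the index n.-2 of the         *)
(* (n-1)-th map.  ob i, mo i for larger indices are unused junk.       *)
Section Seqs.
Variables (C : Cat) (S : Endo C) (n : nat).

Record NSeq := {
  ob : nat -> Obj C;
  mo : forall i, Hom (ob i) (ob i.+1);          (* alpha_{i+1}, for i <= n-2 *)
  lst : Hom (ob n.-2.+1) (So S (ob 0)) }.

Definition is_morph (X Y : NSeq) (phi : forall i, Hom (ob X i) (ob Y i)) : Prop :=
  (forall i, (i <= n.-2)%N -> comp (mo Y i) (phi i) = comp (phi i.+1) (mo X i)) /\
  comp (lst Y) (phi n.-2.+1) = comp (Sm S (phi 0)) (lst X).

Definition is_iso_seq (X Y : NSeq) (phi : forall i, Hom (ob X i) (ob Y i)) : Prop :=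
  is_morph phi /\ forall i, (i <= n.-2.+1)%N -> isom (phi i).

Definition diag (A1 A2 B1 B2 : Obj C) (f : Hom A1 A2) (g : Hom B1 B2)
  : Hom (dsum A1 B1) (dsum A2 B2) :=
  comp inj1 (comp f prj1) + comp inj2 (comp g prj2).

Definition sig_dsum (A B : Obj C) : Hom (dsum (So S A) (So S B)) (So S (dsum A B)) :=
  comp (Sm S (@inj1 C A B)) prj1 + comp (Sm S (@inj2 C A B)) prj2.

(* 2x2 matrix [[-a, 0], [c, b]] : A1 (+) B1 -> A2 (+) B2 *)
Definition cmat (A1 A2 B1 B2 : Obj C) (a : Hom A1 A2) (c : Hom A1 B2) (b : Hom B1 B2)
  : Hom (dsum A1 B1) (dsum A2 B2) :=
  comp inj1 (comp (- a) prj1) + comp inj2 (comp c prj1) + comp inj2 (comp b prj2).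

Definition dsum_seq (X Y : NSeq) : NSeq :=
  {| ob := fun i => dsum (ob X i) (ob Y i);
     mo := fun i => diag (mo X i) (mo Y i);
     lst := comp (sig_dsum (ob X 0) (ob Y 0)) (diag (lst X) (lst Y)) |}.

Definition is_rot (X Y : NSeq) : Prop :=
  (forall i, (i.+1 < n.-2.+1)%N -> heq (mo Y i) (mo X i.+1)) /\
  heq (mo Y n.-2) (lst X) /\
  heq (lst Y) (if odd n then - Sm S (mo X 0) else Sm S (mo X 0)).

Definition is_cone (X Y : NSeq) (phi : forall i, Hom (ob X i) (ob Y i)) (Z : NSeq)
  : Prop :=
  (forall i, (i < n.-2)%N -> heq (mo Z i) (cmat (mo X i.+1) (phi i.+1) (mo Y i))) /\
  heq (mo Z n.-2) (cmat (lst X) (phi n.-2.+1) (mo Y n.-2)) /\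
  heq (lst Z) (comp (sig_dsum (ob X 1) (ob Y 0))
                    (cmat (Sm S (mo X 0)) (Sm S (phi 0)) (lst Y))).

Definition nangulated (N : NSeq -> Prop) : Prop :=
  (forall X Y, N X -> N Y -> N (dsum_seq X Y)) /\
  (forall X Y, N (dsum_seq X Y) -> N X /\ N Y) /\
  (forall X Y phi, @is_iso_seq X Y phi -> N X -> N Y) /\
  (forall (A : Obj C) (X : NSeq), heq (mo X 0) (idm A) ->
      (forall i, (2 <= i <= n.-2.+1)%N -> ob X i = zob) -> N X) /\
  (forall (A B : Obj C) (f : Hom A B), exists X, N X /\ heq (mo X 0) f) /\
  (forall X Y, is_rot X Y -> (N X <-> N Y)) /\
  (forall X Y (f1 : Hom (ob X 0) (ob Y 0)) (f2 : Hom (ob X 1) (ob Y 1)),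
      N X -> N Y -> comp (mo Y 0) f1 = comp f2 (mo X 0) ->
      exists phi : (forall i, Hom (ob X i) (ob Y i)), phi 0 = f1 /\ phi 1 = f2 /\ @is_morph X Y phi) /\
  (forall X Y (f1 : Hom (ob X 0) (ob Y 0)) (f2 : Hom (ob X 1) (ob Y 1)),
      N X -> N Y -> comp (mo Y 0) f1 = comp f2 (mo X 0) ->
      exists phi : (forall i, Hom (ob X i) (ob Y i)), phi 0 = f1 /\ phi 1 = f2 /\ @is_morph X Y phi /\
        exists Z, @is_cone X Y phi Z /\ N Z).

(* Grothendieck group.  An element of F(C) is represented by a formal  *)
(* Z-combination (list of pairs); two represent the same element iff   *)
(* they have the same coefficient at every isomorphism class.          *)
Definition coef (s : seq (int * Obj C)) (Y : Obj C) : int :=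
  \sum_(p <- s) (if excluded_middle_informative (iso_ob p.2 Y) then p.1 else 0).

Definition chi (X : NSeq) : seq (int * Obj C) :=
  [seq ((-1) ^+ i, ob X i) | i <- iota 0 n].

Definition inR (N : NSeq -> Prop) (s : seq (int * Obj C)) : Prop :=
  exists (l : seq (int * NSeq)) (m : int),
    (forall p, List.In p l -> N p.2) /\
    forall Y : Obj C,
      coef s Y = \sum_(p <- l) p.1 * coef (chi p.2) Y
                 + (if odd n then 0 else m * coef [:: (1, zob)] Y).

Definition K0eq (N : NSeq -> Prop) (A B : Obj C) : Prop :=
  inR N [:: (1, A); (-1, B)].

End Seqs.

(* Main.v *)
Require Import Defs.
From mathcomp Require Import all_boot all_order all_algebra.
From Stdlib Require Import ClassicalEpsilon.
From mathcomp Require Import zify ring.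
Import GRing.Theory.

Lemma cnt_win (p : pred nat) i j : (0 < i)%N ->
  count (fun k => p k && ((i == k) || (i == k.+1))) (iota 0 j) =
  (((i.-1 < j) && p i.-1) + ((i < j) && p i))%N.
Proof.
move=> hi; elim: j => [|j IH] //.
rewrite -addn1 iotaD count_cat IH /= add0n addn0 addn1.
case: (ltngtP i j) => [lt|gt|e].
- rewrite (_ : (i == j.+1) = false); last by lia.
  rewrite (_ : (i.-1 < j.+1) = true); last by lia.
  rewrite (_ : (i.-1 < j) = true); last by lia.
  rewrite (_ : (i < j.+1) = true); last by lia.
  by rewrite andbF addn0.
- rewrite (_ : (i < j.+1) = false); last by lia.
  case: (eqVneq i j.+1) => [e|ne].
    subst i => /=; rewrite ltnn ltnSn /=; by case: (p j).
  rewrite (_ : (i.-1 < j.+1) = false); last by lia.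
  rewrite (_ : (i.-1 < j) = false); last by lia.
  by rewrite andbF.
- subst i; rewrite ltnSn.
  rewrite (_ : (j.-1 < j.+1) = true); last by lia.
  rewrite (_ : (j.-1 < j) = true); last by lia.
  by rewrite /= addn0 andbT.
Qed.
Lemma chain_id i j : (0 < i)%N ->
  count (fun k => ((odd k == odd j) == false) && ((i == k) || (i == k.+1))) (iota 0 j) =
  ((i == j) + count (fun k => ((odd k == odd j) == true) && ((i == k) || (i == k.+1))) (iota 0 j))%N.
Proof.
move=> hi; rewrite (cnt_win (fun k => (odd k == odd j) == false)) //.
rewrite (cnt_win (fun k => (odd k == odd j) == true)) //.
case: i hi => // i _ /=.
case: (ltngtP i.+1 j) => [lt|gt|<-].
- by case: (odd i); case: (odd j).
- by [].
- by rewrite /=; case: (odd i).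
Qed.

Set Implicit Arguments. Unset Strict Implicit.
Section Main.
Variables (C : Cat) (S : Endo C) (n : nat) (N : NSeq S n -> Prop).
Hypotheses (hC : Defs.additive C) (hS : is_autom S) (hn : (3 <= n)%N) (hN : nangulated N) (hodd : odd n).
Local Open Scope ring_scope.
Local Notation Hom := (@Defs.Hom C).
Local Notation comp := (@Defs.comp C _ _ _).
Local Notation idm := (@Defs.idm C).

Lemma compA (A B X D : Obj C) (f : Hom X D) (g : Hom B X) (h : Hom A B) :
  comp f (comp g h) = comp (comp f g) h.
Proof. by case: hC => H _; apply: H. Qed.
Lemma comp1f (A B : Obj C) (f : Hom A B) : comp (idm B) f = f.
Proof. by case: hC => _ [H _]; case: (H _ _ f). Qed.
Lemma compf1 (A B : Obj C) (f : Hom A B) : comp f (idm A) = f.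
Proof. by case: hC => _ [H _]; case: (H _ _ f). Qed.
Lemma compDr (A B X : Obj C) (f : Hom B X) (g h : Hom A B) :
  comp f (g + h) = comp f g + comp f h.
Proof. by case: hC => _ [_ [H _]]; apply: H. Qed.
Lemma compDl (A B X : Obj C) (f g : Hom B X) (h : Hom A B) :
  comp (f + g) h = comp f h + comp g h.
Proof. by case: hC => _ [_ [_ [H _]]]; apply: H. Qed.
Lemma zob_from (A : Obj C) (f : Hom zob A) : f = 0.
Proof. by case: hC => _ [_ [_ [_ [H _]]]]; apply: H. Qed.
Lemma zob_to (A : Obj C) (f : Hom A zob) : f = 0.
Proof. by case: hC => _ [_ [_ [_ [_ [H _]]]]]; apply: H. Qed.
Lemma bip (A B : Obj C) :
      comp (@prj1 C A B) inj1 = idm A /\ comp (@prj2 C A B) inj2 = idm B /\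
      comp (@prj1 C A B) inj2 = 0 /\ comp (@prj2 C A B) inj1 = 0 /\
      comp inj1 prj1 + comp inj2 prj2 = idm (dsum A B).
Proof. by case: hC => _ [_ [_ [_ [_ [_ H]]]]]; apply: H. Qed.

Lemma comp0f (A B X : Obj C) (h : Hom A B) : comp (0 : Hom B X) h = 0.
Proof.
have := compDl (0 : Hom B X) 0 h; rewrite addr0 => /eqP; rewrite eq_sym -subr_eq0 addrK.
by move/eqP.
Qed.
Lemma compf0 (A B X : Obj C) (f : Hom B X) : comp f (0 : Hom A B) = 0.
Proof.
have := compDr f (0 : Hom A B) 0; rewrite addr0 => /eqP; rewrite eq_sym -subr_eq0 addrK.
by move/eqP.
Qed.
Lemma compNl (A B X : Obj C) (f : Hom B X) (h : Hom A B) : comp (- f) h = - comp f h.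
Proof. by apply/eqP; rewrite -subr_eq0 opprK -compDl addNr comp0f. Qed.
Lemma compNr (A B X : Obj C) (f : Hom B X) (h : Hom A B) : comp f (- h) = - comp f h.
Proof. by apply/eqP; rewrite -subr_eq0 opprK -compDr addNr compf0. Qed.

Lemma p1i1 (A B X : Obj C) (h : Hom X A) : comp (@prj1 C A B) (comp inj1 h) = h.
Proof. by rewrite compA (proj1 (bip A B)) comp1f. Qed.
Lemma p2i2 (A B X : Obj C) (h : Hom X B) : comp (@prj2 C A B) (comp inj2 h) = h.
Proof. by rewrite compA (proj1 (proj2 (bip A B))) comp1f. Qed.
Lemma p1i2 (A B X : Obj C) (h : Hom X B) : comp (@prj1 C A B) (comp inj2 h) = 0.
Proof. by rewrite compA (proj1 (proj2 (proj2 (bip A B)))) comp0f. Qed.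
Lemma p2i1 (A B X : Obj C) (h : Hom X A) : comp (@prj2 C A B) (comp inj1 h) = 0.
Proof. by rewrite compA (proj1 (proj2 (proj2 (proj2 (bip A B))))) comp0f. Qed.
Lemma idsum (A B : Obj C) : comp (@inj1 C A B) prj1 + comp inj2 prj2 = idm (dsum A B).
Proof. by case: (bip A B) => _ [_ [_ [_ ->]]]. Qed.

Definition isoP := @iso_ob C.

Lemma iso_refl (A : Obj C) : iso_ob A A.
Proof. by exists (idm A), (idm A); rewrite comp1f. Qed.
Lemma iso_sym (A B : Obj C) : iso_ob A B -> iso_ob B A.
Proof. by case=> f [g [h1 h2]]; exists g, f. Qed.
Lemma iso_trans (A B D : Obj C) : iso_ob A B -> iso_ob B D -> iso_ob A D.
Proof.
case=> f [f' [h1 h2]] [g [g' [k1 k2]]]; exists (comp g f), (comp f' g'); split.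
  by rewrite -compA (compA g') k1 comp1f.
by rewrite -compA (compA f) h2 comp1f.
Qed.

Lemma pi11 (A B : Obj C) : comp (@prj1 C A B) inj1 = idm A.
Proof. by case: (bip A B). Qed.
Lemma pi22 (A B : Obj C) : comp (@prj2 C A B) inj2 = idm B.
Proof. by case: (bip A B) => _ []. Qed.
Lemma pi12 (A B : Obj C) : comp (@prj1 C A B) inj2 = 0.
Proof. by case: (bip A B) => _ [_ []]. Qed.
Lemma pi21 (A B : Obj C) : comp (@prj2 C A B) inj1 = 0.
Proof. by case: (bip A B) => _ [_ [_ []]]. Qed.

Ltac bs := rewrite ?(compDl, compDr) -?compA;
  repeat (rewrite ?(p1i1, p2i2, p1i2, p2i1, pi11, pi22, pi12, pi21, comp0f, compf0,
     compNl, compNr, oppr0, addr0, add0r, comp1f, compf1)).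

Lemma diag_comp (A1 A2 A3 B1 B2 B3 : Obj C) (f : Hom A1 A2) (f' : Hom A2 A3)
  (g : Hom B1 B2) (g' : Hom B2 B3) :
  comp (diag f' g') (diag f g) = diag (comp f' f) (comp g' g).
Proof. by rewrite /diag; bs; rewrite !compA. Qed.

Lemma diag1 (A B : Obj C) : diag (idm A) (idm B) = idm (dsum A B).
Proof. by rewrite /diag !comp1f idsum. Qed.

Lemma iso_dsum (A A' B B' : Obj C) : iso_ob A A' -> iso_ob B B' ->
  iso_ob (dsum A B) (dsum A' B').
Proof.
case=> f [f' [h1 h2]] [g [g' [k1 k2]]]; exists (diag f g), (diag f' g').
by rewrite !diag_comp h1 h2 k1 k2 !diag1.
Qed.

Lemma iso_comm (A B : Obj C) : iso_ob (dsum A B) (dsum B A).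
Proof.
exists (comp inj2 prj1 + comp inj1 prj2), (comp inj2 prj1 + comp inj1 prj2).
by split; bs; rewrite addrC idsum.
Qed.

Lemma iso_unit (A : Obj C) : iso_ob (dsum zob A) A.
Proof.
exists prj2, inj2; split; last by rewrite pi22.
by rewrite -idsum (zob_to (@prj1 C zob A)) compf0 add0r.
Qed.

Lemma iso_unitr (A : Obj C) : iso_ob (dsum A zob) A.
Proof. exact: iso_trans (iso_comm _ _) (iso_unit _). Qed.

Lemma iso_assoc (A B D : Obj C) : iso_ob (dsum (dsum A B) D) (dsum A (dsum B D)).
Proof.
exists (comp inj1 (comp prj1 prj1) + comp inj2 (comp inj1 (comp prj2 prj1)) + comp inj2 (comp inj2 prj2)).
exists (comp inj1 (comp inj1 prj1) + comp inj1 (comp inj2 (comp prj1 prj2)) + comp inj2 (comp prj2 prj2)).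
split; bs.
  by rewrite !compA -!compDl -!compA -compDr idsum compf1 idsum.
rewrite -addrA !compA -compDl -!compA -compDr idsum compf1 idsum.
done.
Qed.

Lemma Sm_add (A B : Obj C) (f g : Hom A B) : Sm S (f + g) = Sm S f + Sm S g.
Proof. by case: hS => _ [_ [H _]]; apply: H. Qed.
Lemma Sm_comp (A B X : Obj C) (f : Hom B X) (g : Hom A B) :
  Sm S (comp f g) = comp (Sm S f) (Sm S g).
Proof. by case: hS => _ [H _]; apply: H. Qed.
Lemma Sm_id (A : Obj C) : Sm S (idm A) = idm (So S A).
Proof. by case: hS => H _; apply: H. Qed.
Lemma Sm0 (A B : Obj C) : Sm S (0 : Hom A B) = 0.
Proof.
have := Sm_add (0 : Hom A B) 0; rewrite addr0 => /eqP; rewrite eq_sym -subr_eq0 addrK.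
by move/eqP.
Qed.
Lemma So_surj (Y : Obj C) : exists A, So S A = Y.
Proof. by case: hS => _ [_ [_ [_ [H _]]]]; apply: H. Qed.

Lemma iso_So (A B : Obj C) : iso_ob A B -> iso_ob (So S A) (So S B).
Proof.
case=> f [g [h1 h2]]; exists (Sm S f), (Sm S g).
by rewrite -!Sm_comp h1 h2 !Sm_id.
Qed.

Lemma iso_Szob : iso_ob (So S zob) zob.
Proof.
exists 0, 0; split; rewrite comp0f.
  by rewrite -Sm_id (zob_to (idm zob)) Sm0.
by rewrite (zob_to (idm zob)).
Qed.

Definition Ang (D : nat -> Obj C) :=
  exists X, N X /\ forall i, (i < n)%N -> iso_ob (ob X i) (D i).

Lemma Ang_iso (D E : nat -> Obj C) : Ang D -> (forall i, (i < n)%N -> iso_ob (D i) (E i)) -> Ang E.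
Proof.
case=> X [NX HX] HDE; exists X; split => // i Hi.
exact: iso_trans (HX i Hi) (HDE i Hi).
Qed.

Lemma transport (D : nat -> Obj C) : Ang D ->
  exists Y, N Y /\ forall i, (i < n)%N -> ob Y i = D i.
Proof.
case=> X [NX HX].
have hf : forall i, {fg : Hom (ob X i) (D i) * Hom (D i) (ob X i) |
   (i < n)%N -> comp fg.2 fg.1 = idm _ /\ comp fg.1 fg.2 = idm _}.
  move=> i; case Hi: (i < n)%N; last by exists (0, 0).
  apply: constructive_indefinite_description.
  by case: (HX i Hi) => f [g [h1 h2]]; exists (f, g).
pose f i := (sval (hf i)).1.
pose g i := (sval (hf i)).2.
have gf i : (i < n)%N -> comp (g i) (f i) = idm _.
  by move=> Hi; case: (svalP (hf i) Hi).
have fg i : (i < n)%N -> comp (f i) (g i) = idm _.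
  by move=> Hi; case: (svalP (hf i) Hi).
pose Y := @Build_NSeq C S n D (fun i => comp (f i.+1) (comp (mo X i) (g i)))
   (comp (Sm S (f 0%N)) (comp (lst X) (g n.-2.+1))).
have hn1 : (n.-2.+1 < n)%N by case: n hn => [|[|]].
exists Y; split => //.
case: hN => _ [_ [isoc _]]; apply: (isoc X Y f) => //; split; first split.
- move=> i Hi /=; rewrite -!compA gf ?compf1 //.
  by apply: leq_ltn_trans Hi _; case: n hn => [|[|]].
- by rewrite /= -!compA gf ?compf1.
- move=> i Hi; exists (g i); apply: (svalP (hf i)).
  by apply: leq_ltn_trans Hi _.
Qed.

Lemma Ang_dsum (D E : nat -> Obj C) : Ang D -> Ang E -> Ang (fun i => dsum (D i) (E i)).
Proof.
case=> X [NX HX] [Y [NY HY]]; exists (dsum_seq X Y); split.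
  by case: hN => H _; apply: H.
by move=> i Hi /=; apply: iso_dsum; [apply: HX | apply: HY].
Qed.

Definition obT (D : Obj C) (i : nat) : Obj C :=
  match i with 0 | 1 => D | _ => zob end.
Definition moT (D : Obj C) (i : nat) : Hom (obT D i) (obT D i.+1) :=
  match i return Hom (obT D i) (obT D i.+1) with 0 => idm D | _ => 0 end.

Definition Tk (k : nat) (D : Obj C) (i : nat) : Obj C :=
  if (i == k) || (i == k.+1) then D else zob.

Lemma Ang_T0 (D : Obj C) : Ang (Tk 0 D).
Proof.
exists (@Build_NSeq C S n (obT D) (moT D) 0); split.
  case: hN => _ [_ [_ [triv _]]]; apply: (triv D) => //.
  by case=> [|[|i]].
by case=> [|[|i]] _ /=; apply: iso_refl.
Qed.

Definition castH (A A' B B' : Obj C) (e1 : A = A') (e2 : B = B') (f : Hom A B) : Hom A' B' :=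
  match e1 in _ = A0, e2 in _ = B0 return Hom A0 B0 with erefl, erefl => f end.
Lemma castH_heq (A A' B B' : Obj C) (e1 : A = A') (e2 : B = B') (f : Hom A B) :
  heq (castH e1 e2 f) f.
Proof. by case: A' / e1; case: B' / e2. Qed.

Section Rot.
Variable X : NSeq S n.
Definition obR (i : nat) : Obj C := if i == n.-2.+1 then So S (ob X 0) else ob X i.+1.
Lemma obR_lt i : (i.+1 < n.-2.+1)%N -> ob X i.+1 = obR i.
Proof.
move=> h; rewrite /obR; case: eqP => // e; by move: h; rewrite e ltnS ltnNge leqnSn.
Qed.
Lemma obR_lt1 i : (i.+1 < n.-2.+1)%N -> ob X i.+2 = obR i.+1.
Proof. by move=> h; rewrite /obR (ltn_eqF h). Qed.
Lemma obR_a i : i = n.-2 -> ob X n.-2.+1 = obR i.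
Proof. by move=> ->; rewrite /obR (ltn_eqF (ltnSn _)). Qed.
Lemma obR_b i : i = n.-2 -> So S (ob X 0) = obR i.+1.
Proof. by move=> ->; rewrite /obR eqxx. Qed.
Lemma obR_c : So S (ob X 0) = obR n.-2.+1.
Proof. by rewrite /obR eqxx. Qed.

Definition moR (i : nat) : Hom (obR i) (obR i.+1) :=
  match sumbool_of_bool (i.+1 < n.-2.+1)%N with
  | left h => castH (obR_lt h) (obR_lt1 h) (mo X i.+1)
  | right _ => match PeanoNat.Nat.eq_dec i n.-2 with
               | left h => castH (obR_a h) (obR_b h) (lst X)
               | right _ => 0 end end.

Definition lstR : Hom (obR n.-2.+1) (So S (obR 0)) :=
  castH obR_c (erefl (So S (ob X 1))) (- Sm S (mo X 0)).

Definition rotX := @Build_NSeq C S n obR moR lstR.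

Lemma rotX_rot : is_rot X rotX.
Proof.
split; [|split].
- move=> i hi /=; rewrite /moR; case: sumbool_of_bool => h; first exact: castH_heq.
  by rewrite hi in h.
- rewrite /= /moR; case: sumbool_of_bool => h; first by exfalso; move: (h); rewrite ltnn.
  case: PeanoNat.Nat.eq_dec => // h'; exact: castH_heq.
- by rewrite hodd /= /lstR; apply: castH_heq.
Qed.

Lemma N_rotX : N X -> N rotX.
Proof. by case: hN => _ [_ [_ [_ [_ [H _]]]]] NX; apply/(H _ _ rotX_rot). Qed.
End Rot.

Lemma Ang_rot (D : nat -> Obj C) : Ang D ->
  Ang (fun i => if i == n.-2.+1 then So S (D 0) else D i.+1).
Proof.
move=> /transport [X [NX HX]]; exists (rotX X); split; first exact: N_rotX.
move=> i Hi /=; rewrite /obR; case: eqP => e.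
  rewrite HX; first exact: iso_refl.
  by case: n hn.
rewrite HX; first exact: iso_refl.
move/eqP: e; move: Hi hn; clear; lia.
Qed.

Lemma Ang_Tlast (D : Obj C) : Ang (Tk n.-2 (So S D)).
Proof.
apply: Ang_iso (Ang_rot (Ang_rot (Ang_T0 D))) _ => i Hi; rewrite /Tk /=.
do ! case: eqP => //= ?; try (exfalso; lia); apply: iso_refl.
Qed.

Lemma Ang_Tk (k : nat) (D : Obj C) : (k <= n.-2)%N -> Ang (Tk k D).
Proof.
move=> hk; have [m] : exists m, (k + m = n.-2)%N by exists (n.-2 - k)%N; lia.
elim: m k D hk => [|m IH] k D hk hm.
  have -> : k = n.-2 by lia.
  by case: (So_surj D) => D' <-; apply: Ang_Tlast.
apply: Ang_iso (Ang_rot (IH k.+1 D _ _)) _; try lia.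
move=> i Hi; rewrite /Tk /=.
case: eqP => e.
  have -> : (i == k) = false by apply/eqP; lia.
  have -> : (i == k.+1) = false by apply/eqP; lia.
  exact: iso_Szob.
by apply: iso_refl.
Qed.

Definition msum (u : seq (Obj C)) : Obj C := foldr dsum zob u.
Definition isob (x y : Obj C) : bool :=
  if excluded_middle_informative (iso_ob x y) then true else false.
Lemma isobP x y : reflect (iso_ob x y) (isob x y).
Proof. by rewrite /isob; case: excluded_middle_informative => h; constructor. Qed.
Lemma isob_iso x y Y : iso_ob x y -> isob x Y = isob y Y.
Proof.
move=> h; apply/idP/idP => /isobP h'; apply/isobP.
  exact: iso_trans (iso_sym h) h'.
exact: iso_trans h h'.
Qed.
Definition cnt (Y : Obj C) (u : seq (Obj C)) : nat := count (fun x => isob x Y) u.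
Definition ceq (u v : seq (Obj C)) := forall Y, cnt Y u = cnt Y v.

Lemma msum_cat u w : iso_ob (msum (u ++ w)) (dsum (msum u) (msum w)).
Proof.
elim: u => [|a u IH] /=; first exact: iso_sym (iso_unit _).
apply: iso_trans (iso_dsum (iso_refl a) IH) _.
exact: iso_sym (iso_assoc _ _ _).
Qed.

Lemma msum_rot v1 y v2 : iso_ob (msum (v1 ++ y :: v2)) (dsum y (msum (v1 ++ v2))).
Proof.
elim: v1 => [|a v1 IH] /=; first exact: iso_refl.
apply: iso_trans (iso_dsum (iso_refl a) IH) _.
apply: iso_trans (iso_sym (iso_assoc _ _ _)) _.
apply: iso_trans (iso_dsum (iso_comm _ _) (iso_refl _)) _.
exact: iso_assoc.
Qed.

Lemma split_count (T : Type) (p : pred T) (v : seq T) : (0 < count p v)%N ->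
  exists v1 y v2, v = v1 ++ y :: v2 /\ p y.
Proof.
elim: v => [|a v IH] //=; case pa: (p a) => /= h.
  by exists [::], a, v.
by case: (IH h) => v1 [y [v2 [-> py]]]; exists (a :: v1), y, v2.
Qed.

Lemma ceq_iso u v : ceq u v -> iso_ob (msum u) (msum v).
Proof.
elim: u v => [|x u IH] v h.
  case: v h => [|y v] h; first exact: iso_refl.
  by have := h y; rewrite /cnt /= (introT (isobP _ _) (iso_refl y)).
have : (0 < cnt x v)%N by rewrite -h /cnt /= (introT (isobP _ _) (iso_refl x)).
case/split_count => v1 [y [v2 [ev /isobP yx]]]; subst v.
apply: iso_trans (iso_sym (msum_rot _ _ _)); rewrite /=.
apply: iso_dsum; first exact: iso_sym yx.
apply: IH => Y; have := h Y; rewrite /cnt /= !count_cat /= (isob_iso Y yx).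
lia.
Qed.

Lemma ceq_refl u : ceq u u. Proof. by []. Qed.
Lemma ceq_sym u v : ceq u v -> ceq v u. Proof. by move=> h Y. Qed.
Lemma ceq_trans u v w : ceq u v -> ceq v w -> ceq u w.
Proof. by move=> h h' Y; rewrite h. Qed.
Lemma cnt_cat Y u v : cnt Y (u ++ v) = (cnt Y u + cnt Y v)%N.
Proof. exact: count_cat. Qed.

Definition Ang0 (x : seq (Obj C)) (T : nat -> Obj C) :=
  Ang (fun i => if i is 0 then msum x else T i).

Lemma Ang0_iso x x' T : iso_ob (msum x) (msum x') -> Ang0 x T -> Ang0 x' T.
Proof. by move=> h A0; apply: Ang_iso A0 _; case=> [|i] _ //; apply: iso_refl. Qed.

Lemma Ang0_ceq x x' T : ceq x x' -> Ang0 x T -> Ang0 x' T.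
Proof. by move=> h; apply: Ang0_iso; apply: ceq_iso. Qed.

Lemma Ang0_sum x T y T' : Ang0 x T -> Ang0 y T' ->
  Ang0 (x ++ y) (fun i => dsum (T i) (T' i)).
Proof.
move=> h1 h2; apply: Ang_iso (Ang_dsum h1 h2) _; case=> [|i] _; last exact: iso_refl.
exact: iso_sym (msum_cat _ _).
Qed.

Lemma Ang0_ex x : exists T, Ang0 x T.
Proof.
exists (Tk 0 (msum x)); apply: Ang_iso (Ang_T0 (msum x)) _.
by case=> [|i] _; apply: iso_refl.
Qed.

Definition sim u v := exists c T, Ang0 (u ++ c) T /\ Ang0 (v ++ c) T.

Lemma sim_refl u : sim u u.
Proof. by case: (Ang0_ex (u ++ [::])) => T h; exists [::], T. Qed.
Lemma sim_sym u v : sim u v -> sim v u.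
Proof. by case=> c [T [h1 h2]]; exists c, T. Qed.
Lemma sim_ceql u u' v : ceq u u' -> sim u v -> sim u' v.
Proof.
move=> e [c [T [h1 h2]]]; exists c, T; split => //.
by apply: Ang0_ceq h1 => Y; rewrite !cnt_cat e.
Qed.
Lemma sim_ceqr u v v' : ceq v v' -> sim u v -> sim u v'.
Proof. by move=> e h; apply/sim_sym/(sim_ceql e)/sim_sym. Qed.
Lemma sim_trans u v w : sim u v -> sim v w -> sim u w.
Proof.
case=> c [T [h1 h2]] [c' [T' [h3 h4]]].
exists (c ++ v ++ c'), (fun i => dsum (T i) (T' i)); split.
  by apply: Ang0_ceq (Ang0_sum h1 h3) => Y; rewrite !cnt_cat; lia.
by apply: Ang0_ceq (Ang0_sum h2 h4) => Y; rewrite !cnt_cat; lia.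
Qed.
Lemma sim_catr u v w : sim u v -> sim (u ++ w) (v ++ w).
Proof.
case=> c [T [h1 h2]]; case: (Ang0_ex w) => Tw hw.
exists c, (fun i => dsum (T i) (Tw i)); split.
  by apply: Ang0_ceq (Ang0_sum h1 hw) => Y; rewrite !cnt_cat; lia.
by apply: Ang0_ceq (Ang0_sum h2 hw) => Y; rewrite !cnt_cat; lia.
Qed.
Lemma sim_cancel u v w : sim (u ++ w) (v ++ w) -> sim u v.
Proof. by case=> c [T [h1 h2]]; exists (w ++ c), T; rewrite !catA. Qed.
Lemma sim_cat u v u' v' : sim u v -> sim u' v' -> sim (u ++ u') (v ++ v').
Proof.
move=> h h'; apply: sim_trans (sim_catr u' h) _.
apply: (@sim_ceql (u' ++ v)); first by move=> Y; rewrite !cnt_cat; lia.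
apply: (@sim_ceqr _ (v' ++ v)); first by move=> Y; rewrite !cnt_cat; lia.
exact: sim_catr.
Qed.

Definition AngL (L : nat -> seq (Obj C)) := Ang (fun i => msum (L i)).

Lemma AngL_ceq L L' : (forall i, (i < n)%N -> ceq (L i) (L' i)) -> AngL L -> AngL L'.
Proof. by move=> h A; apply: Ang_iso A _ => i hi; apply/ceq_iso/h. Qed.

Lemma AngL_cat L L' : AngL L -> AngL L' -> AngL (fun i => L i ++ L' i).
Proof.
move=> h1 h2; apply: Ang_iso (Ang_dsum h1 h2) _ => i _.
exact: iso_sym (msum_cat _ _).
Qed.

Lemma AngL_nil : AngL (fun _ => [::]).
Proof. by apply: Ang_iso (Ang_T0 zob) _ => i _ /=; rewrite /Tk; case: ifP => _; apply: iso_refl. Qed.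

Lemma AngL_T k D : (k <= n.-2)%N ->
  AngL (fun i => if (i == k) || (i == k.+1) then [:: D] else [::]).
Proof.
move=> hk; apply: Ang_iso (Ang_Tk D hk) _ => i _ /=; rewrite /Tk.
by case: ifP => _ /=; [apply: iso_sym (iso_unitr _) | apply: iso_refl].
Qed.

Lemma AngL_X X : N X -> AngL (fun i => [:: ob X i]).
Proof. by move=> NX; exists X; split => // i _; apply: iso_sym (iso_unitr _). Qed.

Definition tl (ps : seq (nat * Obj C)) (i : nat) : seq (Obj C) :=
  flatten [seq (if (i == p.1) || (i == p.1.+1) then [:: p.2] else [::]) | p <- ps].

Lemma AngL_tl ps : all (fun p => p.1 <= n.-2)%N ps -> AngL (tl ps).
Proof.
elim: ps => [|p ps IH] /=; first by move=> _; apply: AngL_nil.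
by case/andP => h1 h2; apply: (AngL_cat (AngL_T p.2 h1) (IH h2)).
Qed.

Lemma tl_cat a b i : tl (a ++ b) i = tl a i ++ tl b i.
Proof. by rewrite /tl map_cat flatten_cat. Qed.

Lemma cnt_tl_seq Y (P : pred nat) D s i :
  cnt Y (tl [seq (k, D) | k <- s & P k] i) =
  (isob D Y * count (fun k => P k && ((i == k) || (i == k.+1))) s)%N.
Proof.
elim: s => [|k s IH] /=; first by rewrite muln0.
case: (P k) => /=; last by rewrite IH.
rewrite /tl /= in IH *; rewrite cnt_cat IH mulnDr; congr (_ + _)%N.
by case: ifP => _ /=; rewrite ?muln1 ?muln0 ?addn0.
Qed.

Definition chain (b : bool) (j : nat) (D : Obj C) : seq (nat * Obj C) :=
  [seq (k, D) | k <- iota 0 j & (odd k == odd j) == b].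

Lemma chain_ceq j D i : (0 < i)%N ->
  ceq (tl (chain false j D) i) ((if i == j then [:: D] else [::]) ++ tl (chain true j D) i).
Proof.
move=> hi Y; rewrite cnt_cat /chain !cnt_tl_seq chain_id // mulnDr.
by case: (i == j); rewrite /cnt /= ?addn0 ?muln1 ?muln0.
Qed.

Lemma ps_ceq (F : nat -> Obj C) js i : (0 < i)%N ->
  ceq (tl (flatten [seq chain false j (F j) | j <- js]) i)
      (flatten [seq (if i == j then [:: F j] else [::]) | j <- js] ++
       tl (flatten [seq chain true j (F j) | j <- js]) i).
Proof.
move=> hi; elim: js => [|j js IH] //= Y.
have := @chain_ceq j (F j) i hi Y; have := IH Y.
by rewrite !tl_cat !cnt_cat => -> ->; rewrite addnACA.
Qed.

Lemma pick_iota0 (F : nat -> Obj C) i m k : (i < m)%N ->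
  flatten [seq (if i == j then [:: F j] else [::]) | j <- iota m k] = [::].
Proof.
elim: k m => [|k IH] m h //=.
by rewrite (_ : (i == m) = false) ?IH //; [lia | apply/eqP; lia].
Qed.

Lemma pick_iota (F : nat -> Obj C) i m k : (m <= i < m + k)%N ->
  flatten [seq (if i == j then [:: F j] else [::]) | j <- iota m k] = [:: F i].
Proof.
elim: k m => [|k IH] m h /=; first by lia.
case: eqP => e.
  by subst; rewrite pick_iota0.
by rewrite IH //; lia.
Qed.

Lemma tl0_shift D (P : pred nat) s m :
  tl [seq (k, D) | k <- iota s.+1 m & P k] 0 = [::].
Proof.
elim: m s => [|m IH] s //=; case: (P s.+1) => /=; last exact: IH.
by rewrite /tl /= in IH *; apply: IH.
Qed.

Lemma tl0_chain b j D : (0 < j)%N ->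
  tl (chain b j D) 0 = if (false == odd j) == b then [:: D] else [::].
Proof.
case: j => // j _; rewrite /chain /=.
case: ifP => _ /=; last exact: (tl0_shift D _ 0 j).
by rewrite /tl /= -/(tl _ 0) (tl0_shift D _ 0 j).
Qed.

Definition ev (X : NSeq S n) := [seq ob X i | i <- iota 0 n & ~~ odd i].
Definition od (X : NSeq S n) := [seq ob X i | i <- iota 0 n & odd i].

Lemma tl_flatten ss i : tl (flatten ss) i = flatten [seq tl s i | s <- ss].
Proof. by elim: ss => [|s ss IH] //=; rewrite tl_cat IH. Qed.

Lemma flat_filter (F : nat -> Obj C) (Q : pred nat) s :
  [seq F i | i <- s & Q i] = flatten [seq (if Q j then [:: F j] else [::]) | j <- s].
Proof. by elim: s => [|j s IH] //=; case: (Q j) => /=; rewrite IH. Qed.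

Lemma all_chain b j D : (j <= n.-1)%N -> all (fun p => p.1 <= n.-2)%N (chain b j D).
Proof.
move=> hj; rewrite /chain; have : all (fun k => k <= n.-2)%N (iota 0 j).
  by apply/allP => k; rewrite mem_iota; lia.
elim: (iota 0 j) => [|k s IH] //= /andP [h1 h2].
by case: ifP => _ /=; rewrite ?h1 IH.
Qed.

Lemma all_ps b (F : nat -> Obj C) m k : (m + k <= n)%N ->
  all (fun p => p.1 <= n.-2)%N (flatten [seq chain b j (F j) | j <- iota m k]).
Proof.
elim: k m => [|k IH] m h //=; rewrite all_cat all_chain ?IH //; lia.
Qed.

Lemma key X : N X -> sim (ev X) (od X).
Proof.
move=> NX; set F := ob X; set js := iota 1 n.-1.
set P1 := flatten [seq chain true j (F j) | j <- js].
set P2 := flatten [seq chain false j (F j) | j <- js].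
have ok1 : all (fun p => p.1 <= n.-2)%N P1 by apply: all_ps; lia.
have ok2 : all (fun p => p.1 <= n.-2)%N P2 by apply: all_ps; lia.
have A1 := AngL_cat (AngL_X NX) (AngL_tl ok1).
have A2 := AngL_tl ok2.
have A1' : AngL (fun i => if i is 0 then [:: F 0%N] ++ tl P1 0 else tl P2 i).
  apply: AngL_ceq A1 => -[|i] hi //.
  apply: ceq_sym; apply: ceq_trans (ps_ceq F js (ltn0Sn i)) _.
  by rewrite /js pick_iota //; lia.
have e0 : iota 0 n = 0%N :: js by rewrite /js; case: (n) hn.
have E1 : ev X = [:: F 0%N] ++ tl P1 0.
  rewrite /ev e0 /= /P1 tl_flatten -map_comp flat_filter; congr (_ :: flatten _).
  apply/eq_in_map => j; rewrite /js mem_iota => hj /=; rewrite tl0_chain; last by lia.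
  by case: (odd j).
have E2 : od X = tl P2 0.
  rewrite /od e0 /= /P2 tl_flatten -map_comp flat_filter; congr (flatten _).
  apply/eq_in_map => j; rewrite /js mem_iota => hj /=; rewrite tl0_chain; last by lia.
  by case: (odd j).
exists [::], (fun i => msum (tl P2 i)); rewrite !cats0 E1 E2; split.
  by apply: Ang_iso A1' _ => -[|i] _; apply: iso_refl.
by apply: Ang_iso A2 _ => -[|i] _; apply: iso_refl.
Qed.

Lemma coef_chi_sum (X : NSeq S n) Y s :
  \sum_(p <- [seq ((-1) ^+ i, ob X i) | i <- s])
     (if excluded_middle_informative (iso_ob p.2 Y) then p.1 else 0) =
  (cnt Y [seq ob X i | i <- s & ~~ odd i])%:Z - (cnt Y [seq ob X i | i <- s & odd i])%:Z.
Proof.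
elim: s => [|i s IH]; first by rewrite big_nil.
rewrite big_cons IH /= -signr_odd /cnt /isob.
case: (odd i) => /=; case: excluded_middle_informative => _ /=; rewrite ?expr0 ?expr1; lia.
Qed.

Lemma coef_chi (X : NSeq S n) Y :
  coef (chi X) Y = (cnt Y (ev X))%:Z - (cnt Y (od X))%:Z.
Proof. exact: coef_chi_sum. Qed.

Definition rep (k : nat) (s : seq (Obj C)) := flatten (nseq k s).
Lemma cnt_rep Y k s : cnt Y (rep k s) = (k * cnt Y s)%N.
Proof. by elim: k => [|k IH] //=; rewrite /rep /= cnt_cat -/(rep k s) IH mulSn. Qed.

Definition FU (l : seq (int * NSeq S n)) : seq (Obj C) :=
  flatten [seq (if (0 <= p.1)%R then rep `|p.1|%N (od p.2) else rep `|p.1|%N (ev p.2)) | p <- l].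
Definition FV (l : seq (int * NSeq S n)) : seq (Obj C) :=
  flatten [seq (if (0 <= p.1)%R then rep `|p.1|%N (ev p.2) else rep `|p.1|%N (od p.2)) | p <- l].

Lemma sum_FUV l Y : \sum_(p <- l) p.1 * coef (chi p.2) Y =
  (cnt Y (FV l))%:Z - (cnt Y (FU l))%:Z.
Proof.
elim: l => [|[[k|k] X] l IH]; first by rewrite big_nil.
  rewrite big_cons IH /FU /FV /= !cnt_cat !cnt_rep coef_chi !PoszD !PoszM /=; ring.
rewrite big_cons IH /FU /FV /= !cnt_cat !cnt_rep coef_chi !PoszD !PoszM NegzE /=; ring.
Qed.

Lemma sim_rep k u v : sim u v -> sim (rep k u) (rep k v).
Proof.
move=> h; elim: k => [|k IH]; first exact: sim_refl.
exact: sim_cat h IH.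
Qed.

Lemma sim_FUV l : (forall p, List.In p l -> N p.2) -> sim (FU l) (FV l).
Proof.
elim: l => [|p l IH] hl; first exact: sim_refl.
rewrite /FU /FV /=; apply: sim_cat; last by apply: IH => q hq; apply: hl; right.
have Np := hl p (or_introl erefl).
by case: ifP => _; apply: sim_rep; [apply: sim_sym|]; apply: key.
Qed.

Lemma dir12 A B : K0eq N A B -> sim [:: A] [:: B].
Proof.
case=> l [m [hl heq]].
have hc : ceq (A :: FU l) (B :: FV l).
  move=> Y; have := heq Y; rewrite hodd addr0 sum_FUV /coef !big_cons big_nil /=.
  rewrite /cnt /= -/(cnt Y (FU l)) -/(cnt Y (FV l)) /isob.
  by destruct (excluded_middle_informative (iso_ob A Y)); destruct (excluded_middle_informative (iso_ob B Y)); simpl; lia.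
have h1 : sim (A :: FU l) (B :: FV l) by apply: sim_ceqr hc (sim_refl _).
have h2 : sim (B :: FV l) (B :: FU l).
  by apply: (sim_cat (u := [:: B]) (sim_refl _)); apply/sim_sym/sim_FUV.
exact: (@sim_cancel [:: A] [:: B] (FU l) (sim_trans h1 h2)).
Qed.

Definition Dspl (E C0 : Obj C) (i : nat) : Obj C :=
  match i with 0 => E | 1 => dsum E C0 | 2 => C0 | _ => zob end.

Lemma Ang_spl E C0 : Ang (Dspl E C0).
Proof.
have h1 : (1 <= n.-2)%N by lia.
apply: Ang_iso (Ang_dsum (Ang_T0 E) (Ang_Tk (k:=1) C0 h1)) _.
case=> [|[|[|i]]] _ /=; rewrite /Tk /=.
- exact: iso_unitr.
- exact: iso_refl.
- exact: iso_unit.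
- exact: iso_unit.
Qed.

Definition wt (Y D : Obj C) (i : nat) : int :=
  if excluded_middle_informative (iso_ob D Y) then (-1) ^+ i else 0.

Lemma coef_chi_iota (P : NSeq S n) Y :
  coef (chi P) Y = \sum_(i <- iota 0 n) wt Y (ob P i) i.
Proof. by rewrite /coef /chi big_map. Qed.

Lemma tail_eq (P Q : NSeq S n) Y m : (forall i, (2 <= i < m.+2)%N -> ob P i = ob Q i) ->
  \sum_(i <- iota 2 m) wt Y (ob P i) i = \sum_(i <- iota 2 m) wt Y (ob Q i) i.
Proof.
move=> h; apply: eq_big_seq => i; rewrite mem_iota => hi.
by rewrite h //; lia.
Qed.

Lemma coef_diff (P Q : NSeq S n) Y : (forall i, (2 <= i < n)%N -> ob P i = ob Q i) ->
  coef (chi P) Y - coef (chi Q) Y =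
  wt Y (ob P 0) 0 - wt Y (ob Q 0) 0 + (wt Y (ob P 1) 1 - wt Y (ob Q 1) 1).
Proof.
move=> h; rewrite !coef_chi_iota.
have e : iota 0 n = [:: 0%N, 1%N & iota 2 n.-2] by case: (n) hn => [|[|k]].
rewrite e !big_cons (@tail_eq P Q Y n.-2); last by move=> i hi; apply: h; lia.
ring.
Qed.

Lemma main_sec A B : K0eq N A B <->
  exists (Cs : nat -> Obj C) (X Y : NSeq S n),
    N X /\ N Y /\
    ob X 0%N = dsum A (Cs 0%N) /\ ob Y 0%N = dsum B (Cs 0%N) /\
    (forall i, (1 <= i < n)%N -> ob X i = Cs i /\ ob Y i = Cs i).
Proof.
split.
  case/dir12 => c [T [h1 h2]].
  case: (transport h1) => X [NX HX]; case: (transport h2) => Y [NY HY].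
  exists (fun i => if i is 0 then msum c else T i), X, Y.
  have n0 : (0 < n)%N by lia.
  split; first done; split; first done.
  split; first by rewrite HX.
  split; first by rewrite HY.
  by case=> [|i] // hi; rewrite HX ?HY //; lia.
case=> Cs [X [Y [NX [NY [hX [hY hXY]]]]]].
case: (transport (Ang_spl A (Cs 0%N))) => ZA [NZA HZA].
case: (transport (Ang_spl B (Cs 0%N))) => ZB [NZB HZB].
exists [:: (1, X); (-1, Y); (1, ZA); (-1, ZB)], 0; split.
  by move=> p /= [<-|[<-|[<-|[<-|[]]]]].
move=> Y'; rewrite hodd addr0 /coef !big_cons !big_nil /= -!/(coef _ _).
have n0 : (0 < n)%N by lia.
have n1 : (1 < n)%N by lia.
have e1 : forall i, (2 <= i < n)%N -> ob X i = ob Y i.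
  by move=> i hi; rewrite (proj1 (hXY i _)) ?(proj2 (hXY i _)) //; lia.
have e2 : forall i, (2 <= i < n)%N -> ob ZA i = ob ZB i.
  by move=> i hi; rewrite HZA ?HZB; try lia; case: i hi => [|[|[|i]]].
have d1 := @coef_diff X Y Y' e1; have d2 := @coef_diff ZA ZB Y' e2.
rewrite hX hY (proj1 (hXY 1%N _)) ?(proj2 (hXY 1%N _)) // in d1.
rewrite !HZA // !HZB // /= in d2.
move: d1 d2; rewrite /wt /= expr0 expr1.
repeat match goal with |- context [excluded_middle_informative ?P] => destruct (excluded_middle_informative P) end; simpl; lia.
Qed.

End Main.

Unset Implicit Arguments.

Theorem corollary2p4 (C : Cat) (S : Endo C) (n : nat) (N : NSeq S n -> Prop)
  (hC : Defs.additive C) (hS : is_autom S) (hn : 3 <= n) (hodd : odd n)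
  (hN : nangulated N) (A B : Obj C) :
  K0eq N A B <->
  exists (Cs : nat -> Obj C) (X Y : NSeq S n),
    N X /\ N Y /\
    ob X 0 = dsum A (Cs 0) /\ ob Y 0 = dsum B (Cs 0) /\
    (forall i, 1 <= i < n -> ob X i = Cs i /\ ob Y i = Cs i).
Proof.
exact: (main_sec hC hS hn hN hodd).
Qed.
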